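(* Let $n\ge 1$ be an integer, $a>0$, and let $a_0,\dots,a_{n-1}:((-a,a)\setminus\{0\})\times\mathbb{K}\to\mathbb{K}$ be arbitrary functions, where $\mathbb{K}=\mathbb{R}$ or $\mathbb{C}$. Let $f\in C^\infty(-a,a)$ (with values in $\mathbb{K}$) be a solution of $$f^{(n)}(x)+a_{n-1}(x,f(x))f^{(n-1)}(x)+\cdots+a_0(x,f(x))f(x)=0,\qquad x\in(-a,a)\setminus\{0\},$$ satisfying $f(0)=f'(0)=\cdots=f^{(n-1)}(0)=0$. Suppose that $$\limsup_{x\to 0}|x|^{n-k}\,|a_k(x,f(x))|\le \frac1e,\qquad k=0,1,\dots,n-1,$$ where $e$ is Euler's number. Then there exists $\delta>0$ such that $f\equiv 0$ on $[-\delta,\delta]$.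
   Context: The coefficients may be singular at $x=0$; the equation is only required to hold for $x\neq 0$. *)

(* Defs.v *)
From Stdlib Require Export Reals Lra.
Open Scope R_scope.

(* Existence of such a D is exactly f = D 0 in C^infty(-a,a),
   with f^(k) = D k on (-a,a). *)
Definition R_derivs (a : R) (D : nat -> R -> R) : Prop :=
  forall (k : nat) (x : R), -a < x < a ->
    derivable_pt_lim (D k) x (D (S k) x).

Fixpoint R_lower_sum (c : nat -> R -> R -> R) (D : nat -> R -> R)
    (x : R) (m : nat) : R :=
  match m with
  | O => 0
  | S m' => R_lower_sum c D x m' + c m' x (D O x) * D m' x
  end.

Definition CC := (R * R)%type.
Definition C0 : CC := (0, 0).
Definition Cadd (z w : CC) : CC := (fst z + fst w, snd z + snd w).
Definition Cmul (z w : CC) : CC :=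
  (fst z * fst w - snd z * snd w, fst z * snd w + snd z * fst w).
Definition Cmod (z : CC) : R := sqrt (fst z ^ 2 + snd z ^ 2).

Definition C_derivs (a : R) (D : nat -> R -> CC) : Prop :=
  forall (k : nat) (x : R), -a < x < a ->
    derivable_pt_lim (fun t => fst (D k t)) x (fst (D (S k) x)) /\
    derivable_pt_lim (fun t => snd (D k t)) x (snd (D (S k) x)).

Fixpoint C_lower_sum (c : nat -> R -> CC -> CC) (D : nat -> R -> CC)
    (x : R) (m : nat) : CC :=
  match m with
  | O => C0
  | S m' => Cadd (C_lower_sum c D x m') (Cmul (c m' x (D O x)) (D m' x))
  end.

(* Main.v *)
Require Import Defs.
From Stdlib Require Import Reals Lra Lia Psatz Factorial FunctionalExtensionality.
Open Scope R_scope.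

Fixpoint sumk (f : nat -> R) (m : nat) : R :=
  match m with O => 0 | S m' => sumk f m' + f m' end.

Lemma sumk_le f g m : (forall k, (k < m)%nat -> f k <= g k) -> sumk f m <= sumk g m.
Proof. induction m; simpl; intros H. lra.
  assert (f m <= g m) by (apply H; lia). assert (sumk f m <= sumk g m) by (apply IHm; intros; apply H; lia). lra. Qed.

Lemma sumk_scal c f m : sumk (fun k => c * f k) m = c * sumk f m.
Proof. induction m; simpl. ring. rewrite IHm. ring. Qed.

Lemma sum_fact_le_exp n : sum_f_R0 (fun i => / INR (fact i)) n <= exp 1.
Proof.
  unfold exp. destruct (exist_exp 1) as [l Hl]. simpl.
  unfold exp_in in Hl.
  assert (Hcv : Un_cv (fun n => sum_f_R0 (fun i => / INR (fact i) * 1 ^ i) n) l) by exact Hl.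
  assert (Hg : Un_growing (fun n => sum_f_R0 (fun i => / INR (fact i) * 1 ^ i) n)).
  { intro k. rewrite tech5. rewrite pow1. assert (0 < / INR (fact (S k))).
    apply Rinv_0_lt_compat. apply INR_fact_lt_0. lra. }
  pose proof (growing_ineq _ _ Hg Hcv n) as H.
  replace (sum_f_R0 (fun i => / INR (fact i)) n) with (sum_f_R0 (fun i => / INR (fact i) * 1 ^ i) n). exact H.
  apply sum_eq. intros. rewrite pow1. ring.
Qed.

Lemma sumk_fact n m : (m <= n)%nat ->
  sumk (fun k => / INR (fact (n - k))) m + sum_f_R0 (fun i => / INR (fact i)) (n - m)
  = sum_f_R0 (fun i => / INR (fact i)) n.
Proof.
  induction m; intros Hm. simpl. rewrite Nat.sub_0_r. ring.
  simpl. rewrite <- IHm by lia.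
  replace (n - m)%nat with (S (n - S m)) by lia. simpl. ring.
Qed.

Lemma sumk_fact_bound n : sumk (fun k => / INR (fact (n - k))) n <= exp 1 - 1.
Proof.
  pose proof (sumk_fact n n (le_n n)). rewrite Nat.sub_diag in H. simpl in H.
  pose proof (sum_fact_le_exp n). lra.
Qed.

Lemma core (n : nat) (r beta : R) (F b : nat -> R -> R) :
  (1 <= n)%nat -> 0 < r -> 0 <= beta -> beta * (exp 1 - 1) < 1 ->
  (forall k x, Rabs x <= r -> 0 <= F k x) ->
  (forall k C m, (k < n)%nat ->
     (forall t, Rabs t <= r -> F (S k) t <= C * Rabs t ^ m / INR (fact m)) ->
     forall x, Rabs x <= r -> F k x <= C * Rabs x ^ (S m) / INR (fact (S m))) ->
  (forall x, 0 < Rabs x <= r -> F n x <= sumk (fun k => b k x * F k x) n) ->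
  (forall k x, (k < n)%nat -> 0 < Rabs x <= r -> 0 <= b k x /\ Rabs x ^ (n - k) * b k x <= beta) ->
  (exists t0, Rabs t0 <= r /\ forall t, Rabs t <= r -> F n t <= F n t0) ->
  continuity_pt (F n) 0 ->
  forall x, Rabs x <= r -> F O x <= 0.
Proof.
  intros Hn Hr Hb Hbe Fnn T E B [t0 [Ht0 Hmax]] Hc.
  set (M := F n t0).
  assert (HM0 : 0 <= M) by (apply Fnn; auto).
  assert (TA : forall j, (j <= n)%nat -> forall x, Rabs x <= r ->
            F (n - j)%nat x <= M * Rabs x ^ j / INR (fact j)).
  { induction j; intros Hj x Hx.
    - rewrite Nat.sub_0_r. simpl. unfold Rdiv. rewrite Rinv_1. rewrite !Rmult_1_r. apply Hmax; auto.
    - apply T. lia. intros t Ht. replace (S (n - S j)) with (n - j)%nat by lia. apply IHj; auto; lia. auto. }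
  set (q := beta * (exp 1 - 1)).
  assert (Hq0 : 0 <= q). { unfold q. pose proof (exp_ineq1 1 R1_neq_R0). apply Rmult_le_pos; lra. }
  assert (HB : forall x, 0 < Rabs x <= r -> F n x <= q * M).
  { intros x Hx. eapply Rle_trans. apply E; auto.
    apply Rle_trans with (sumk (fun k => (beta * M) * / INR (fact (n - k))) n).
    - apply sumk_le. intros k Hk. destruct (B k x Hk Hx) as [Hb0 Hb1].
      pose proof (TA (n - k)%nat ltac:(lia) x ltac:(lra)) as Hk2.
      replace (n - (n - k))%nat with k in Hk2 by lia.
      assert (Hf : 0 < INR (fact (n - k))) by apply INR_fact_lt_0.
      apply Rle_trans with (b k x * (M * Rabs x ^ (n - k) / INR (fact (n - k)))).
      + apply Rmult_le_compat_l; auto.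
      + unfold Rdiv. replace (b k x * (M * Rabs x ^ (n - k) * / INR (fact (n - k))))
          with (M * / INR (fact (n - k)) * (Rabs x ^ (n - k) * b k x)) by ring.
        replace (beta * M * / INR (fact (n - k))) with (M * / INR (fact (n - k)) * beta) by ring.
        apply Rmult_le_compat_l; auto. apply Rmult_le_pos; auto. left; apply Rinv_0_lt_compat; auto.
    - rewrite sumk_scal. pose proof (sumk_fact_bound n). unfold q.
      replace (beta * (exp 1 - 1) * M) with (beta * M * (exp 1 - 1)) by ring.
      apply Rmult_le_compat_l; auto. apply Rmult_le_pos; auto. }
  assert (H0 : F n 0 <= q * M).
  { destruct (Rle_dec (F n 0) (q * M)) as [h|h]; auto. exfalso.
    destruct (Hc (F n 0 - q * M) ltac:(lra)) as [alp [Halp Hy]].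
    set (y := Rmin (alp / 2) r).
    assert (Hy0 : 0 < y) by (unfold y; apply Rmin_glb_lt; lra).
    assert (Hy1 : y <= alp / 2) by apply Rmin_l. assert (Hy2 : y <= r) by apply Rmin_r.
    assert (Ha : Rabs y = y) by (apply Rabs_right; lra).
    specialize (Hy y). simpl in Hy. unfold Rdist, D_x, no_cond in Hy.
    assert (Hd : Rabs (F n y - F n 0) < F n 0 - q * M).
    { apply Hy. split. split; auto; lra. rewrite Rminus_0_r, Ha. lra. }
    pose proof (HB y ltac:(lra)). apply Rabs_def2 in Hd. lra. }
  assert (HMq : M <= q * M).
  { destruct (Req_dec t0 0) as [->|Hne]. exact H0. apply HB. split; auto. apply Rabs_pos_lt; auto. }
  assert (Hq1 : q < 1) by (unfold q; lra).
  assert (M <= 0). { apply (Rmult_le_reg_l (1 - q)). lra. rewrite Rmult_0_r. lra. }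
  intros x Hx. pose proof (TA n (le_n n) x Hx). rewrite Nat.sub_diag in H1.
  assert (0 <= Rabs x ^ n / INR (fact n)).
  { unfold Rdiv. apply Rmult_le_pos. apply pow_le, Rabs_pos. left; apply Rinv_0_lt_compat, INR_fact_lt_0. }
  assert (M = 0) by lra. rewrite H3 in H1. lra.
Qed.

Lemma dpl_ext f g x l l' : (forall t, f t = g t) -> l = l' -> derivable_pt_lim f x l -> derivable_pt_lim g x l'.
Proof. intros H <-. replace g with f; auto. apply functional_extensionality; auto. Qed.

Lemma Rabs_le_inv x y : Rabs x <= y -> - y <= x <= y.
Proof. unfold Rabs; destruct (Rcase_abs x); lra. Qed.

Lemma mvi (g g' G G' : R -> R) u v : u <= v ->
  (forall t, u <= t <= v -> derivable_pt_lim g t (g' t)) ->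
  (forall t, u <= t <= v -> derivable_pt_lim G t (G' t)) ->
  (forall t, u <= t <= v -> Rabs (g' t) <= G' t) ->
  Rabs (g v - g u) <= G v - G u.
Proof.
  intros Huv Hg HG Hb. destruct (Req_dec u v) as [<-|Hne].
  { rewrite !Rminus_diag, Rabs_R0. lra. }
  assert (Hlt : u < v) by lra.
  destruct (MVT_cor2 (fun t => G t - g t) (fun t => G' t - g' t) u v Hlt) as [c1 [E1 H1]].
  { intros c Hc. apply derivable_pt_lim_minus; auto. }
  destruct (MVT_cor2 (fun t => G t + g t) (fun t => G' t + g' t) u v Hlt) as [c2 [E2 H2]].
  { intros c Hc. apply derivable_pt_lim_plus; auto. }
  pose proof (Hb c1 ltac:(lra)) as B1. pose proof (Hb c2 ltac:(lra)) as B2.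
  apply Rabs_le_inv in B1. apply Rabs_le_inv in B2. 
  assert (0 <= (G' c1 - g' c1) * (v - u)) by (apply Rmult_le_pos; lra).
  assert (0 <= (G' c2 + g' c2) * (v - u)) by (apply Rmult_le_pos; lra).
  apply Rabs_le. lra.
Qed.

Lemma fact_S_INR m : INR (fact (S m)) = INR (S m) * INR (fact m).
Proof. rewrite <- mult_INR. reflexivity. Qed.

Lemma taylor_gen (r : R) (Fk Fk1 : R -> R) (C : R) (m : nat) :
 0 < r ->
 (forall u v G G', u <= v -> Rabs u <= r -> Rabs v <= r -> (u = 0 \/ v = 0) ->
   (forall t, u <= t <= v -> derivable_pt_lim G t (G' t)) ->
   (forall t, u <= t <= v -> Fk1 t <= G' t) -> Fk (u + v) <= G v - G u) ->
 (forall t, Rabs t <= r -> Fk1 t <= C * Rabs t ^ m / INR (fact m)) ->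
 forall x, Rabs x <= r -> Fk x <= C * Rabs x ^ S m / INR (fact (S m)).
Proof.
  intros Hr HM Hb x Hx.
  assert (Hf : 0 < INR (fact m)) by apply INR_fact_lt_0.
  assert (HS : 0 < INR (S m)) by (apply lt_0_INR; lia).
  set (K := C / INR (fact (S m))).
  destruct (Rle_dec 0 x) as [Hx0|Hx0].
  - pose proof (HM 0 x (fun t => K * t ^ S m) (fun t => C * t ^ m / INR (fact m)) Hx0
      ltac:(rewrite Rabs_R0; lra) Hx (or_introl eq_refl)) as H.
    rewrite Rplus_0_l in H. rewrite Rabs_right in * by lra.
    replace (C * x ^ S m / INR (fact (S m))) with (K * x ^ S m - K * 0 ^ S m).
    apply H.
    + intros t Ht. apply (dpl_ext (mult_real_fct K (fun y => y ^ S m)) _ t (K * (INR (S m) * t ^ pred (S m)))); [reflexivity| |].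
      2: apply derivable_pt_lim_scal, derivable_pt_lim_pow.
      unfold K. rewrite fact_S_INR. simpl pred. field. lra.
    + intros t Ht. pose proof (Hb t ltac:(rewrite Rabs_right; lra)). rewrite Rabs_right in H0 by lra. exact H0.
    + unfold K. rewrite pow_i by lia. unfold Rdiv. ring.
  - pose proof (HM x 0 (fun t => - (K * (- t) ^ S m)) (fun t => C * (- t) ^ m / INR (fact m)) ltac:(lra)
      Hx ltac:(rewrite Rabs_R0; lra) (or_intror eq_refl)) as H.
    rewrite Rplus_0_r in H. rewrite Rabs_left in * by lra.
    replace (C * (- x) ^ S m / INR (fact (S m))) with (- (K * (- 0) ^ S m) - - (K * (- x) ^ S m)).
    apply H.
    + intros t Ht.
      apply (dpl_ext (comp (fun y => - (K * y ^ S m)) (fun y => - y)) _ t ((- (K * (INR (S m) * (- t) ^ pred (S m)))) * (-1))); [reflexivity| |].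
      2: { apply derivable_pt_lim_comp.
           apply (dpl_ext (opp_fct id) _ t (-1)). reflexivity. reflexivity. apply derivable_pt_lim_opp, derivable_pt_lim_id.
           apply (dpl_ext (opp_fct (mult_real_fct K (fun y => y ^ S m))) _ (- t) (- (K * (INR (S m) * (- t) ^ pred (S m))))). reflexivity. reflexivity.
           apply derivable_pt_lim_opp, derivable_pt_lim_scal, derivable_pt_lim_pow. }
      unfold K. rewrite fact_S_INR. simpl pred. field. lra.
    + intros t Ht. destruct (Req_dec t 0) as [->|Ht0].
      * pose proof (Hb 0 ltac:(rewrite Rabs_R0; lra)). rewrite Rabs_R0 in H0. rewrite Ropp_0. exact H0.
      * pose proof (Hb t ltac:(rewrite Rabs_left; lra)). rewrite Rabs_left in H0 by lra. exact H0.
    + unfold K. rewrite Ropp_0, pow_i by lia. unfold Rdiv. ring.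
Qed.

Lemma unif n (P : nat -> R -> Prop) :
  (forall k eta eta', 0 < eta' <= eta -> P k eta -> P k eta') ->
  (forall k, (k < n)%nat -> exists eta, 0 < eta /\ P k eta) ->
  exists eta, 0 < eta /\ forall k, (k < n)%nat -> P k eta.
Proof.
  intros Hm. induction n; intros H.
  - exists 1. split. lra. intros; lia.
  - destruct IHn as [e1 [He1 P1]]. intros; apply H; lia.
    destruct (H n (Nat.lt_succ_diag_r n)) as [e2 [He2 P2]].
    exists (Rmin e1 e2). split. apply Rmin_glb_lt; auto.
    intros k Hk. destruct (Nat.eq_dec k n) as [->|Hne].
    + eapply Hm; [|exact P2]. split. apply Rmin_glb_lt; auto. apply Rmin_r.
    + eapply Hm; [|apply P1; lia]. split. apply Rmin_glb_lt; auto. apply Rmin_l.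
Qed.

Lemma Rabs_le0 y : Rabs y <= 0 -> y = 0.
Proof. intros H. destruct (Req_dec y 0); auto. pose proof (Rabs_no_R0 y H0). pose proof (Rabs_pos y). lra. Qed.

Lemma beta_ok : (/ exp 1 + / (exp 1 * exp 1)) * (exp 1 - 1) < 1.
Proof.
  pose proof (exp_ineq1 1 R1_neq_R0).
  replace ((/ exp 1 + / (exp 1 * exp 1)) * (exp 1 - 1)) with (1 - / (exp 1 * exp 1)) by (field; lra).
  assert (0 < / (exp 1 * exp 1)) by (apply Rinv_0_lt_compat; nra). lra.
Qed.

Lemma R_sum_bound c D x m :
  Rabs (R_lower_sum c D x m) <= sumk (fun k => Rabs (c k x (D O x)) * Rabs (D k x)) m.
Proof. induction m; simpl. rewrite Rabs_R0; lra.
  eapply Rle_trans. apply Rabs_triang. rewrite Rabs_mult. lra. Qed.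

Lemma real_case :
  (forall (n : nat) (a : R) (c : nat -> R -> R -> R) (D : nat -> R -> R),
     (1 <= n)%nat -> 0 < a ->
     R_derivs a D ->
     (forall x, -a < x < a -> x <> 0 -> D n x + R_lower_sum c D x n = 0) ->
     (forall k, (k < n)%nat -> D k 0 = 0) ->
     (forall k, (k < n)%nat -> forall eps, 0 < eps -> exists eta, 0 < eta /\
        forall x, -a < x < a -> 0 < Rabs x < eta ->
          Rabs x ^ (n - k) * Rabs (c k x (D O x)) <= / exp 1 + eps) ->
     exists delta, 0 < delta /\ delta < a /\
       forall x, -delta <= x <= delta -> D O x = 0).
Proof.
  intros n a c D Hn Ha HD Heq H0 Hlim.
  set (eps := / (exp 1 * exp 1)).
  assert (Heps : 0 < eps). { unfold eps. pose proof (exp_pos 1). apply Rinv_0_lt_compat; nra. }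
  destruct (unif n (fun k eta => forall x, -a < x < a -> 0 < Rabs x < eta ->
          Rabs x ^ (n - k) * Rabs (c k x (D O x)) <= / exp 1 + eps)) as [eta [Heta Hu]].
  { intros k e e' He P x Hx Hx'. apply P; auto; lra. }
  { intros k Hk. apply Hlim; auto. }
  set (r := Rmin eta a / 2).
  assert (Hr0 : 0 < r) by (unfold r; assert (0 < Rmin eta a) by (apply Rmin_glb_lt; auto); lra).
  assert (Hra : r < a) by (unfold r; pose proof (Rmin_r eta a); lra).
  assert (Hre : r < eta) by (unfold r; pose proof (Rmin_l eta a); lra).
  assert (Hin : forall t, Rabs t <= r -> -a < t < a) by (intros t Ht; apply Rabs_le_inv in Ht; lra).
  assert (Hcont : forall t, Rabs t <= r -> continuity_pt (fun t => Rabs (D n t)) t).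
  { intros t Ht. apply (continuity_pt_comp (D n) Rabs).
    apply derivable_continuous_pt. exists (D (S n) t). apply HD; auto.
    apply Rcontinuity_abs. }
  exists r. split; auto. split; auto. intros x Hx.
  apply Rabs_le0.
  apply (core n r (/ exp 1 + eps) (fun k t => Rabs (D k t)) (fun k t => Rabs (c k t (D O t)))); auto.
  - left. pose proof (exp_pos 1). pose proof (Rinv_0_lt_compat _ H). lra.
  - apply beta_ok.
  - intros; apply Rabs_pos.
  - intros k C m Hk Hb. cbv beta in Hb |- *. apply (taylor_gen r (fun t => Rabs (D k t)) (fun t => Rabs (D (S k) t)) C m); auto.
    intros u v G G' Huv Hu1 Hv Huv0 HG Hdom.
    assert (Hm : Rabs (D k v - D k u) <= G v - G u).
    { apply (mvi (D k) (D (S k)) G G'); auto.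
      intros t Ht. apply HD. apply Rabs_le_inv in Hu1. apply Rabs_le_inv in Hv. lra. }
    destruct Huv0 as [ -> | -> ].
    + rewrite H0 in Hm by auto. rewrite Rminus_0_r in Hm. rewrite Rplus_0_l. exact Hm.
    + rewrite H0 in Hm by auto. rewrite Rminus_0_l, Rabs_Ropp in Hm. rewrite Rplus_0_r. exact Hm.
  - intros t Ht. assert (Hdn : D n t = - R_lower_sum c D t n).
    { pose proof (Heq t (Hin t ltac:(lra))). assert (t <> 0). intro; subst; rewrite Rabs_R0 in Ht; lra. lra. }
    rewrite Hdn, Rabs_Ropp. apply R_sum_bound.
  - intros k t Hk Ht. split. apply Rabs_pos. apply Hu; [auto | apply Hin; lra | lra].
  - destruct (continuity_ab_maj (fun t => Rabs (D n t)) (- r) r ltac:(lra)) as [Mx [HM HMx]].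
    { intros t Ht. apply Hcont. apply Rabs_le; lra. }
    exists Mx. split. apply Rabs_le; lra. intros t Ht. apply HM. apply Rabs_le_inv; auto.
  - apply Hcont. rewrite Rabs_R0; lra.
  - apply Rabs_le; lra.
Qed.

Lemma Cmod_nonneg z : 0 <= Cmod z.
Proof. apply sqrt_pos. Qed.

Lemma Cmod_sq z : Cmod z * Cmod z = fst z ^ 2 + snd z ^ 2.
Proof. unfold Cmod. apply sqrt_sqrt. nra. Qed.

Lemma le_sqrt_of_sq A B : 0 <= B -> A * A <= B * B -> Rabs A <= B.
Proof. intros HB H. apply Rabs_le. nra. Qed.

Lemma Cmod_triang z w : Cmod (Cadd z w) <= Cmod z + Cmod w.
Proof.
  pose proof (Cmod_sq z). pose proof (Cmod_sq w). pose proof (Cmod_sq (Cadd z w)).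
  pose proof (Cmod_nonneg z). pose proof (Cmod_nonneg w). pose proof (Cmod_nonneg (Cadd z w)).
  destruct z as [a b], w as [c d]. unfold Cadd in *. cbn [fst snd] in *.
  set (p := Cmod (a, b)) in *. set (q := Cmod (c, d)) in *. set (s := Cmod (a + c, b + d)) in *.
  assert (Hpq : (p * q) * (p * q) = (a^2+b^2)*(c^2+d^2)) by (rewrite <- H, <- H0; ring).
  assert (Hcs : (a*c+b*d)*(a*c+b*d) <= (p*q)*(p*q)) by (rewrite Hpq; pose proof (pow2_ge_0 (a*d-b*c)); nra).
  assert (Hpq0 : 0 <= p * q) by nra.
  assert (a*c+b*d <= p*q). { pose proof (le_sqrt_of_sq _ _ Hpq0 Hcs). pose proof (Rle_abs (a*c+b*d)). lra. }
  assert (s * s <= (p + q) * (p + q)) by nra. nra.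
Qed.

Lemma Cmod_mul z w : Cmod (Cmul z w) = Cmod z * Cmod w.
Proof.
  destruct z as [a b], w as [c d]. unfold Cmod, Cmul. simpl.
  rewrite <- sqrt_mult by nra. f_equal. ring.
Qed.

Lemma Cmod_add0 z s : Cadd z s = C0 -> Cmod z = Cmod s.
Proof.
  destruct z as [a b], s as [c d]. unfold Cadd, C0. simpl. intros H. injection H. intros.
  unfold Cmod. simpl. f_equal. replace a with (-c) by lra. replace b with (-d) by lra. ring.
Qed.

Lemma Cmod_le0 z : Cmod z <= 0 -> z = C0.
Proof.
  intros H. pose proof (Cmod_nonneg z). destruct z as [a b]. unfold Cmod in *. cbn [fst snd] in *.
  assert (sqrt (a^2+b^2) = 0) by lra. apply sqrt_eq_0 in H1; [|nra].
  assert (Ha : a * a = 0) by nra. assert (Hb : b * b = 0) by nra.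
  unfold C0. f_equal; [destruct (Rmult_integral _ _ Ha)|destruct (Rmult_integral _ _ Hb)]; auto.
Qed.

Lemma C_sum_bound c D x m :
  Cmod (C_lower_sum c D x m) <= sumk (fun k => Cmod (c k x (D O x)) * Cmod (D k x)) m.
Proof. induction m; simpl.
  - unfold Cmod, C0. cbn [fst snd]. replace (0^2+0^2) with 0 by ring. rewrite sqrt_0. lra.
  - eapply Rle_trans. apply Cmod_triang. rewrite Cmod_mul. lra. Qed.

Lemma cs w1 w2 x y : w1^2 + w2^2 <= 1 -> Rabs (w1 * x + w2 * y) <= Cmod (x, y).
Proof.
  intros Hw. pose proof (Cmod_sq (x, y)). pose proof (Cmod_nonneg (x, y)). cbn [fst snd] in *.
  apply le_sqrt_of_sq; auto. rewrite H.
  assert ((w1*x+w2*y)*(w1*x+w2*y) <= (w1^2+w2^2)*(x^2+y^2)) by (pose proof (pow2_ge_0 (w1*y-w2*x)); nra).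
  assert (0 <= x^2+y^2) by (pose proof (pow2_ge_0 x); pose proof (pow2_ge_0 y); lra).
  assert ((w1^2+w2^2)*(x^2+y^2) <= 1 * (x^2+y^2)) by (apply Rmult_le_compat_r; lra). lra.
Qed.

Lemma Lc (g : R -> CC) (g' : R -> CC) (G G' : R -> R) u v : u <= v ->
  (forall t, u <= t <= v -> derivable_pt_lim (fun s => fst (g s)) t (fst (g' t)) /\
                            derivable_pt_lim (fun s => snd (g s)) t (snd (g' t))) ->
  (forall t, u <= t <= v -> derivable_pt_lim G t (G' t)) ->
  (forall t, u <= t <= v -> Cmod (g' t) <= G' t) ->
  Cmod (fst (g v) - fst (g u), snd (g v) - snd (g u)) <= G v - G u.
Proof.
  intros Huv Hg HG Hb.
  assert (W : forall w1 w2, w1^2 + w2^2 <= 1 ->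
     Rabs (w1 * (fst (g v) - fst (g u)) + w2 * (snd (g v) - snd (g u))) <= G v - G u).
  { intros w1 w2 Hw.
    replace (w1 * (fst (g v) - fst (g u)) + w2 * (snd (g v) - snd (g u)))
      with ((fun s => w1 * fst (g s) + w2 * snd (g s)) v - (fun s => w1 * fst (g s) + w2 * snd (g s)) u) by ring.
    apply (mvi (fun s => w1 * fst (g s) + w2 * snd (g s)) (fun s => w1 * fst (g' s) + w2 * snd (g' s)) G G' u v); auto.
    - intros t Ht. destruct (Hg t Ht) as [H1 H2].
      apply (dpl_ext (mult_real_fct w1 (fun s => fst (g s)) + mult_real_fct w2 (fun s => snd (g s)))%F _ t
               (w1 * fst (g' t) + w2 * snd (g' t))); [reflexivity|reflexivity|].
      apply derivable_pt_lim_plus; apply derivable_pt_lim_scal; auto.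
    - intros t Ht. eapply Rle_trans; [|apply Hb; auto]. destruct (g' t). apply cs; auto. }
  set (d1 := fst (g v) - fst (g u)) in *. set (d2 := snd (g v) - snd (g u)) in *.
  pose proof (Cmod_sq (d1, d2)) as Hsq. pose proof (Cmod_nonneg (d1, d2)) as Hn. cbn [fst snd] in Hsq.
  set (N := Cmod (d1, d2)) in *.
  destruct (Req_dec N 0) as [HN|HN].
  - rewrite HN. pose proof (W 0 0 ltac:(simpl; lra)). pose proof (Rabs_pos (0 * d1 + 0 * d2)). lra.
  - pose proof (W (d1 / N) (d2 / N)) as HW.
    assert (E1 : d1 / N * d1 + d2 / N * d2 = (d1^2+d2^2)/N) by (field; auto).
    rewrite <- Hsq in E1. replace (N * N / N) with N in E1 by (field; auto).
    assert (E2 : (d1 / N) ^ 2 + (d2 / N) ^ 2 = (d1^2+d2^2)/(N*N)) by (field; auto).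
    rewrite <- Hsq in E2. replace (N * N / (N * N)) with 1 in E2 by (field; auto).
    rewrite E1 in HW. rewrite Rabs_right in HW by lra. apply HW. lra.
Qed.

Lemma cont_Cmod (f : R -> CC) t : continuity_pt (fun s => fst (f s)) t ->
  continuity_pt (fun s => snd (f s)) t -> continuity_pt (fun s => Cmod (f s)) t.
Proof.
  intros H1 H2.
  set (h := (mult_fct (fun s => fst (f s)) (fun s => fst (f s)) + mult_fct (fun s => snd (f s)) (fun s => snd (f s)))%F).
  assert (Hh : continuity_pt h t) by (apply continuity_pt_plus; apply continuity_pt_mult; auto).
  replace (fun s => Cmod (f s)) with (comp sqrt h).
  - apply continuity_pt_comp; auto. apply continuity_pt_sqrt. unfold h, plus_fct, mult_fct. nra.
  - apply functional_extensionality. intro s. unfold comp, h, plus_fct, mult_fct, Cmod. f_equal. ring.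
Qed.

Lemma Cmod_sub0 z : Cmod (fst z - 0, snd z - 0) = Cmod z.
Proof. destruct z. unfold Cmod. cbn [fst snd]. f_equal. ring. Qed.
Lemma Cmod_0sub z : Cmod (0 - fst z, 0 - snd z) = Cmod z.
Proof. destruct z. unfold Cmod. cbn [fst snd]. f_equal. ring. Qed.

Lemma complex_case :
  (forall (n : nat) (a : R) (c : nat -> R -> CC -> CC) (D : nat -> R -> CC),
     (1 <= n)%nat -> 0 < a ->
     C_derivs a D ->
     (forall x, -a < x < a -> x <> 0 -> Cadd (D n x) (C_lower_sum c D x n) = C0) ->
     (forall k, (k < n)%nat -> D k 0 = C0) ->
     (forall k, (k < n)%nat -> forall eps, 0 < eps -> exists eta, 0 < eta /\
        forall x, -a < x < a -> 0 < Rabs x < eta ->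
          Rabs x ^ (n - k) * Cmod (c k x (D O x)) <= / exp 1 + eps) ->
     exists delta, 0 < delta /\ delta < a /\
       forall x, -delta <= x <= delta -> D O x = C0).
Proof.
  intros n a c D Hn Ha HD Heq H0 Hlim.
  set (eps := / (exp 1 * exp 1)).
  assert (Heps : 0 < eps). { unfold eps. pose proof (exp_pos 1). apply Rinv_0_lt_compat; nra. }
  destruct (unif n (fun k eta => forall x, -a < x < a -> 0 < Rabs x < eta ->
          Rabs x ^ (n - k) * Cmod (c k x (D O x)) <= / exp 1 + eps)) as [eta [Heta Hu]].
  { intros k e e' He P x Hx Hx'. apply P; auto; lra. }
  { intros k Hk. apply Hlim; auto. }
  set (r := Rmin eta a / 2).
  assert (Hr0 : 0 < r) by (unfold r; assert (0 < Rmin eta a) by (apply Rmin_glb_lt; auto); lra).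
  assert (Hra : r < a) by (unfold r; pose proof (Rmin_r eta a); lra).
  assert (Hre : r < eta) by (unfold r; pose proof (Rmin_l eta a); lra).
  assert (Hin : forall t, Rabs t <= r -> -a < t < a) by (intros t Ht; apply Rabs_le_inv in Ht; lra).
  assert (Hcont : forall t, Rabs t <= r -> continuity_pt (fun t => Cmod (D n t)) t).
  { intros t Ht. destruct (HD n t (Hin t Ht)) as [D1 D2]. apply cont_Cmod.
    apply derivable_continuous_pt. exists (fst (D (S n) t)). exact D1.
    apply derivable_continuous_pt. exists (snd (D (S n) t)). exact D2. }
  exists r. split; auto. split; auto. intros x Hx.
  apply Cmod_le0.
  apply (core n r (/ exp 1 + eps) (fun k t => Cmod (D k t)) (fun k t => Cmod (c k t (D O t)))); auto.
  - left. pose proof (exp_pos 1). pose proof (Rinv_0_lt_compat _ H). lra.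
  - apply beta_ok.
  - intros; apply Cmod_nonneg.
  - intros k C m Hk Hb. cbv beta in Hb |- *.
    apply (taylor_gen r (fun t => Cmod (D k t)) (fun t => Cmod (D (S k) t)) C m); auto.
    intros u v G G' Huv Hu1 Hv Huv0 HG Hdom.
    assert (Hm : Cmod (fst (D k v) - fst (D k u), snd (D k v) - snd (D k u)) <= G v - G u).
    { apply (Lc (D k) (D (S k)) G G'); auto.
      intros t Ht. apply HD. apply Rabs_le_inv in Hu1. apply Rabs_le_inv in Hv. lra. }
    destruct Huv0 as [ -> | -> ].
    + rewrite H0 in Hm by auto. unfold C0 in Hm. cbn [fst snd] in Hm. rewrite Cmod_sub0 in Hm.
      rewrite Rplus_0_l. exact Hm.
    + rewrite H0 in Hm by auto. unfold C0 in Hm. cbn [fst snd] in Hm. rewrite Cmod_0sub in Hm.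
      rewrite Rplus_0_r. exact Hm.
  - intros t Ht. cbv beta.
    assert (t <> 0) by (intro; subst; rewrite Rabs_R0 in Ht; lra).
    rewrite (Cmod_add0 _ _ (Heq t (Hin t ltac:(lra)) H)). apply C_sum_bound.
  - intros k t Hk Ht. split. apply Cmod_nonneg. apply Hu; [auto | apply Hin; lra | lra].
  - destruct (continuity_ab_maj (fun t => Cmod (D n t)) (- r) r ltac:(lra)) as [Mx [HM HMx]].
    { intros t Ht. apply Hcont. apply Rabs_le; lra. }
    exists Mx. split. apply Rabs_le; lra. intros t Ht. apply HM. apply Rabs_le_inv; auto.
  - apply Hcont. rewrite Rabs_R0; lra.
  - apply Rabs_le; lra.
Qed.
Theorem theorem1 :
  (* K = R *)
  (forall (n : nat) (a : R) (c : nat -> R -> R -> R) (D : nat -> R -> R),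
     (1 <= n)%nat -> 0 < a ->
     R_derivs a D ->
     (forall x, -a < x < a -> x <> 0 -> D n x + R_lower_sum c D x n = 0) ->
     (forall k, (k < n)%nat -> D k 0 = 0) ->
     (* limsup_{x->0} |x|^(n-k) |a_k(x,f(x))| <= 1/e *)
     (forall k, (k < n)%nat -> forall eps, 0 < eps -> exists eta, 0 < eta /\
        forall x, -a < x < a -> 0 < Rabs x < eta ->
          Rabs x ^ (n - k) * Rabs (c k x (D O x)) <= / exp 1 + eps) ->
     exists delta, 0 < delta /\ delta < a /\
       forall x, -delta <= x <= delta -> D O x = 0)
  /\
  (* K = C *)
  (forall (n : nat) (a : R) (c : nat -> R -> CC -> CC) (D : nat -> R -> CC),
     (1 <= n)%nat -> 0 < a ->
     C_derivs a D ->
     (forall x, -a < x < a -> x <> 0 -> Cadd (D n x) (C_lower_sum c D x n) = C0) ->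
     (forall k, (k < n)%nat -> D k 0 = C0) ->
     (forall k, (k < n)%nat -> forall eps, 0 < eps -> exists eta, 0 < eta /\
        forall x, -a < x < a -> 0 < Rabs x < eta ->
          Rabs x ^ (n - k) * Cmod (c k x (D O x)) <= / exp 1 + eps) ->
     exists delta, 0 < delta /\ delta < a /\
       forall x, -delta <= x <= delta -> D O x = C0).
Proof. split; [exact real_case | exact complex_case]. Qed.
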